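(* For every $n\in\mathbb{N}$ and every $m\in\{0,1,\dots,n\}$, \[ \sum_{j=0}^{n}\sum_{i=0}^{j}\frac{\binom{2n+2}{i}}{\binom{2n-m}{j}}=2^{m-1}(2n+1-m)\left(H_n+\frac{2^{2n+1}}{(n+1)\binom{2n+1}{n+1}}+\sum_{k=1}^{m}\frac{1}{2^{k-1}k}\left(\frac{\frac{2^{2n+2}k}{2n+2-k}-\binom{2n+2}{n+1}}{2\binom{2n+1-k}{n+1}}+1\right)\right). \]
   Context: $H_n=\sum_{k=1}^{n}\frac1k$ is the $n$-th harmonic number ($H_0=0$). Empty sums are $0$. *)

(* Defs.v *)
From HB Require Import structures.
From mathcomp Require Import all_boot all_order all_algebra.
Set Implicit Arguments. Unset Strict Implicit. Unset Printing Implicit Defensive.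
Import Order.TTheory GRing.Theory Num.Theory.
Local Open Scope ring_scope.

Definition harmonic (n : nat) : rat := \sum_(1 <= k < n.+1) (k%:R)^-1.

(* Main.v *)
Require Import Defs.
From HB Require Import structures.
From mathcomp Require Import all_boot all_order all_algebra.
From mathcomp Require Import ring lra zify.
Import Order.TTheory GRing.Theory Num.Theory.
Local Open Scope ring_scope.




Lemma binL1 (K j : nat) :
  'C(K, j.+1)%:R = (K%:R - j%:R) / (j.+1)%:R * ('C(K, j)%:R : rat).
Proof.
have h := mul_bin_left K j.
case: (leqP j K) => hj.
  have : ((j.+1 * 'C(K, j.+1))%:R : rat) = ((K - j) * 'C(K, j))%:R by rewrite h.
  rewrite !natrM natrB // => e.
  rewrite mulrAC -e mulrAC divff ?mul1r //.
  by rewrite pnatr_eq0.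
by rewrite !bin_small // ?mulr0 // (ltn_trans hj).
Qed.

Lemma binL2 (K j : nat) : (j <= K)%N ->
  'C(K.+1, j)%:R = (K.+1)%:R / ((K.+1)%:R - j%:R) * ('C(K, j)%:R : rat).
Proof.
move=> hj.
have h := mul_bin_down K.+1 j.
have : ((K.+1 * 'C(K, j))%:R : rat) = ((K.+1 - j) * 'C(K.+1, j))%:R by rewrite h.
rewrite !natrM natrB ?(leq_trans hj) // => e.
have hne : ((K.+1)%:R - j%:R : rat) != 0.
  by rewrite subr_eq0 eqr_nat; apply/negP => /eqP E; move: hj; rewrite -E ltnn.
apply: (mulfI hne).
rewrite -e mulrA mulrCA mulrA.
by rewrite mulfK.
Qed.



Definition B (N j : nat) : rat := \sum_(0 <= i < j) ('C(N, i))%:R.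

Lemma BS N j : B N j.+1 = B N j + ('C(N, j))%:R.
Proof. by rewrite /B big_nat_recr. Qed.

Lemma B0 N : B N 0 = 0.
Proof. by rewrite /B big_geq. Qed.

Lemma BN1 N j : B N.+1 j.+1 = 2 * B N j.+1 - ('C(N, j))%:R.
Proof.
elim: j => [|j IH].
  by rewrite !BS !B0 !bin0; ring.
rewrite BS IH [B N j.+2]BS binS natrD; ring.
Qed.

Lemma BN2 N j : B N.+2 j.+1 =
  4 * B N j.+1 - 2 * ('C(N, j))%:R - ('C(N.+1, j))%:R.
Proof. rewrite BN1 BN1; ring. Qed.

Lemma Btot N : B N N.+1 = 2 ^+ N.
Proof.
elim: N => [|N IH]; first by rewrite BS B0 bin0 expr0; ring.
rewrite BN1 BS IH bin_small // exprS; ring.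
Qed.

Lemma Bhalf n : B (2 * n + 2) n.+1 =
  (2 ^+ (2 * n + 2) - ('C(2 * n + 2, n.+1))%:R) / 2.
Proof.
set N := (2 * n + 2)%N.
have tot := Btot N.
have h1 : B N N.+1 = B N n.+1 + ('C(N, n.+1))%:R
   + \sum_(n.+2 <= i < N.+1) ('C(N, i))%:R.
  rewrite /B (@big_cat_nat _ _ _ n.+1) //=; last by rewrite /N; lia.
  by rewrite (@big_ltn _ _ _ n.+1) /= ?addrA //; rewrite /N; lia.
have h2 : \sum_(n.+2 <= i < N.+1) ('C(N, i))%:R = B N n.+1 :> rat.
  rewrite -{1}(add0n n.+2) big_addn.
  have -> : (N.+1 - n.+2 = n.+1)%N by rewrite /N; lia.
  rewrite /B big_nat_rev /=.
  apply: eq_big_nat => i /andP [_ hi].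
  rewrite add0n -bin_sub; last by rewrite /N; lia.
  congr (_%:R); congr binomial; rewrite /N; lia.
rewrite h2 tot in h1.
by rewrite h1; field.
Qed.



Definition fM N K j : rat := B N j / ('C(K, j))%:R.
Definition gM N K j : rat :=
  ((K%:R + 1 - j%:R) * ('C(N, j))%:R) / ('C(K, j))%:R.

Lemma mstep_term N k j (hj : (j <= k)%N) (d : rat)
  (hd : d = N%:R - 1 - (k.+1)%:R) (hd0 : d != 0) :
  B N j.+1 / ('C(k, j))%:R
  - 2 * (k.+1)%:R / ((k.+1)%:R + 1) * (B N j.+1 / ('C(k.+1, j))%:R)
  = (k.+1)%:R / ((k.+1)%:R + 1) *
    (fM N k.+1 j.+1 - fM N k.+1 j - (gM N k.+1 j.+1 - gM N k.+1 j) / d).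
Proof.
rewrite /fM /gM BS !binL1 (binL2 _ _ hj).
have c0 : ('C(k, j))%:R != 0 :> rat by rewrite pnatr_eq0 -lt0n bin_gt0.
have c1 : (k.+1)%:R - j%:R != 0 :> rat.
  by rewrite subr_eq0 eqr_nat; apply/negP => /eqP E; move: hj; rewrite -E ltnn.
have c2 : (j.+1)%:R != 0 :> rat by rewrite pnatr_eq0.
have c3 : (k.+1)%:R != 0 :> rat by rewrite pnatr_eq0.
have c4 : (k.+1)%:R + 1 != 0 :> rat by rewrite natr1 pnatr_eq0.
rewrite hd; rewrite hd in hd0.
field.
rewrite !(addrC 1) !natr1 c0 c1 c2 c3 hd0 /=.
by rewrite pnatr_eq0.
Qed.

Definition Sm (n m : nat) : rat :=
  \sum_(0 <= j < n.+1) B (2 * n + 2) j.+1 / ('C(2 * n - m, j))%:R.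

Lemma mstep n m (hmn : (m < n)%N) :
  Sm n m.+1 - 2 * (2 * n - m)%:R / ((2 * n - m)%:R + 1) * Sm n m
  = (2 * n - m)%:R / ((2 * n - m)%:R + 1) *
    (fM (2 * n + 2) (2 * n - m) n.+1
     - (gM (2 * n + 2) (2 * n - m) n.+1 - gM (2 * n + 2) (2 * n - m) 0)
       / (m.+1)%:R).
Proof.
have hk : (2 * n - m = (2 * n - m.+1).+1)%N by lia.
rewrite /Sm hk.
set k := (2 * n - m.+1)%N.
rewrite mulr_sumr -sumrB.
have hf0 : fM (2 * n + 2) k.+1 0 = 0 by rewrite /fM B0 mul0r.
have hd : (m.+1)%:R = (2 * n + 2)%:R - 1 - (k.+1)%:R :> rat.
  have e : (m.+1 + k.+1 + 1 = 2 * n + 2)%N by rewrite /k; lia.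
  rewrite -e !natrD; ring.
have hd0 : (m.+1)%:R != 0 :> rat by rewrite pnatr_eq0.
rewrite (@telescope_sumr_eq _ 0 n.+1
  (fun j => (k.+1)%:R / ((k.+1)%:R + 1) *
            (fM (2 * n + 2) k.+1 j - gM (2 * n + 2) k.+1 j / (m.+1)%:R))) //=.
  rewrite hf0; ring.
move=> j hj.
rewrite (@mstep_term (2 * n + 2) k j _ (m.+1)%:R hd hd0); last by rewrite /k; lia.
ring.
Qed.



Definition FB M j : rat :=
  4 / ((M%:R + 2) * (M%:R + 1)) * B M.+2 j * (M%:R + 1 - j%:R)
  * (j%:R / 2 - (3 * M%:R + 7) / 4) / ('C(M, j))%:R.
Definition EB M j : rat := (M%:R + 3) / (M%:R + 3 - j%:R).

Lemma base_term M j (hj : (j < M)%N) :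
  B M.+4 j.+1 / ('C(M.+2, j))%:R
  - (M%:R + 3) / (M%:R + 1) * (B M.+2 j.+1 / ('C(M, j))%:R)
  = FB M j.+1 - FB M j + (EB M j.+1 - EB M j).
Proof.
have hjM : (j <= M)%N by apply: ltnW.
rewrite /FB /EB (BN2 M.+2) BS (binL2 _ _ (leqW (leqW hjM))).
rewrite (binL2 _ _ (leqW hjM)) (binL2 _ _ hjM) binL1.
have c0 : ('C(M, j))%:R != 0 :> rat by rewrite pnatr_eq0 -lt0n bin_gt0.
have hr : j%:R + 1 <= M%:R :> rat by rewrite natr1 ler_nat.
have hr0 : 0 <= j%:R :> rat by rewrite ler0n.
rewrite -!natr1.
field.
rewrite c0 /=.
by repeat (apply/andP; split); apply: lt0r_neq0; lra.
Qed.



Lemma cent1 n : ('C((2 * n).+1, n.+1))%:R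
  = (2 * n%:R + 1) / (n%:R + 1) * ('C(2 * n, n))%:R :> rat.
Proof.
have h : (n <= 2 * n)%N by lia.
rewrite binL1 (binL2 _ _ h).
have hn : 0 <= n%:R :> rat by rewrite ler0n.
rewrite -!natr1 natrM.
field.
by repeat (apply/andP; split); apply: lt0r_neq0; lra.
Qed.

Lemma cent2 n : ('C((2 * n).+2, n.+1))%:R
  = 2 * (2 * n%:R + 1) / (n%:R + 1) * ('C(2 * n, n))%:R :> rat.
Proof.
have h : (n.+1 <= (2 * n).+1)%N by lia.
rewrite (binL2 _ _ h) cent1.
have hn : 0 <= n%:R :> rat by rewrite ler0n.
rewrite -!natr1 natrM.
field.
by repeat (apply/andP; split); apply: lt0r_neq0; lra.
Qed.

Lemma cent0 n : ('C(2 * n, n.+1))%:R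
  = n%:R / (n%:R + 1) * ('C(2 * n, n))%:R :> rat.
Proof.
rewrite binL1.
have hn : 0 <= n%:R :> rat by rewrite ler0n.
rewrite -!natr1 natrM.
field.
by repeat (apply/andP; split); apply: lt0r_neq0; lra.
Qed.



Lemma base_step n (hn : (0 < n)%N) :
  Sm n.+1 0 = ((2 * n)%:R + 3) / ((2 * n)%:R + 1) * Sm n 0
   + (EB (2 * n) n.+1 - EB (2 * n) 0) + FB (2 * n) n.+1
   + B (2 * n).+4 n.+2 / ('C((2 * n).+2, n.+1))%:R.
Proof.
rewrite /Sm !subn0.
have -> : (2 * n.+1 + 2 = (2 * n).+4)%N by lia.
have -> : (2 * n.+1 = (2 * n).+2)%N by lia.
have -> : (2 * n + 2 = (2 * n).+2)%N by lia.
rewrite big_nat_recr //=.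
congr (_ + _).
have hf0 : FB (2 * n) 0 = 0 by rewrite /FB B0 !mulr0 !mul0r.
set s1 := \sum_(0 <= i < n.+1) _.
set s0 := \sum_(0 <= j < n.+1) _.
set c := ((2 * n)%:R + 3) / ((2 * n)%:R + 1) : rat.
have key : s1 - c * s0 = (FB (2 * n) n.+1 + EB (2 * n) n.+1)
                        - (FB (2 * n) 0 + EB (2 * n) 0).
  rewrite /s1 /s0 mulr_sumr -sumrB.
  apply: (@telescope_sumr_eq _ 0 n.+1 (fun j => FB (2 * n) j + EB (2 * n) j)) => // j hj.
  rewrite base_term; last by lia.
  rewrite /c; ring.
rewrite -(subrK (c * s0) s1) key hf0; ring.
Qed.

Lemma base_ind p (hp : (0 < p)%N) :
  Sm p 0 = (2 * p%:R + 1) / 2 * harmonic p + 2 ^+ (2 * p) / ('C(2 * p, p))%:R ->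
  Sm p.+1 0 = (2 * p.+1%:R + 1) / 2 * harmonic p.+1
              + 2 ^+ (2 * p.+1) / ('C(2 * p.+1, p.+1))%:R.
Proof.
move=> IH.
rewrite base_step // IH /EB /FB.
have hh : harmonic p.+1 = harmonic p + (p.+1%:R)^-1 by rewrite /harmonic big_nat_recr.
have e1 : B (2 * p).+2 p.+1 = (2 ^+ (2 * p).+2 - ('C((2 * p).+2, p.+1))%:R) / 2.
  by rewrite -(addn2 (2 * p)) Bhalf.
have e2 : B (2 * p).+4 p.+2 = (2 ^+ (2 * p).+4 - ('C((2 * p).+4, p.+2))%:R) / 2.
  have -> : ((2 * p).+4 = 2 * p.+1 + 2)%N by lia.
  by rewrite Bhalf.
have e3 : ('C((2 * p).+4, p.+2))%:R = 2 * (2 * p.+1%:R + 1) / (p.+1%:R + 1)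
            * ('C((2 * p).+2, p.+1))%:R :> rat.
  have -> : ((2 * p).+4 = (2 * p.+1).+2)%N by lia.
  rewrite cent2; congr (_ * _%:R); congr binomial; lia.
have e4 : (2 * p.+1 = (2 * p).+2)%N by lia.
rewrite hh e1 e2 e3 e4 cent2 cent0 !exprS.
set X := ('C(2 * p, p))%:R.
set P := (2 : rat) ^+ (2 * p).
have hX : X != 0 by rewrite /X pnatr_eq0 -lt0n bin_gt0; lia.
have hp0 : 0 <= p%:R :> rat by rewrite ler0n.
rewrite -!natr1 !natrM.
field.
have hp1 : 1 <= p%:R :> rat by rewrite (ler_nat _ 1).
rewrite -/X hX /=.
by repeat (apply/andP; split); apply: lt0r_neq0; lra.
Qed.

Lemma base_closed n : Sm n 0 =
  (2 * n%:R + 1) / 2 * harmonic n + 2 ^+ (2 * n) / ('C(2 * n, n))%:R.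
Proof.
elim: n => [|n IH].
  rewrite /Sm /harmonic /B !big_nat1 big_geq // !bin0 expr0 mulr0 mul0r.
case: n IH => [|n] IH.
  rewrite /Sm /harmonic big_nat_recr //= big_nat1 big_nat1.
  rewrite !BS !B0 !bin0 !bin1 (_ : (2*1+2 = 4)%N) // (_ : (2*1-0 = 2)%N) // (_ : (2*1 = 2)%N) //.
exact: base_ind.
Qed.



Lemma pow2z m : (2%:R ^ (m%:Z - 1) : rat) = 2 ^+ m / 2.
Proof.
rewrite expfzDr ?pnatr_eq0 // exprN1.
Qed.

Definition tau n k : rat :=
  ((2%:R ^+ k.-1 * k%:R)^-1 *
          (((2%:R ^+ (2 * n + 2) * k%:R) / ((2 * n + 2 - k)%N)%:R
              - ('C(2 * n + 2, n.+1))%:R)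
           / (2%:R * ('C(2 * n + 1 - k, n.+1))%:R)
           + 1)).

Definition Xs n m : rat := harmonic n
     + (2%:R ^+ (2 * n + 1)) / ((n.+1)%:R * ('C(2 * n + 1, n.+1))%:R)
     + \sum_(1 <= k < m.+1) tau n k.

Lemma main_ind n m (hm : (m <= n)%N) :
  Sm n m = (2%:R ^ (m%:Z - 1) : rat) * ((2 * n + 1 - m)%N)%:R * Xs n m.
Proof.
elim: m hm => [|m IH] hm.
  rewrite pow2z base_closed /Xs big_geq // addr0 subn0 addn1 cent1.
  set X := ('C(2 * n, n))%:R.
  have hX : X != 0 by rewrite /X pnatr_eq0 -lt0n bin_gt0; lia.
  have hn0 : 0 <= n%:R :> rat by rewrite ler0n.
  rewrite -!natr1 !natrM exprS.
  field.
  rewrite -/X hX /=.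
  by repeat (apply/andP; split); apply: lt0r_neq0; lra.
have IH' := IH (ltnW hm).
have ms := mstep _ _ hm.
rewrite IH' in ms.
have hX1 : Xs n m.+1 = Xs n m + tau n m.+1 by rewrite /Xs big_nat_recr //= addrA.
rewrite hX1 pow2z.
have -> : Sm n m.+1 = (Sm n m.+1 - 2 * (2 * n - m)%:R / ((2 * n - m)%:R + 1) *
   (2 ^ (m%:Z - 1) * (2 * n + 1 - m)%:R * Xs n m))
   + 2 * (2 * n - m)%:R / ((2 * n - m)%:R + 1) *
   (2 ^ (m%:Z - 1) * (2 * n + 1 - m)%:R * Xs n m) by ring.
rewrite ms pow2z /tau /fM /gM Bhalf bin0 /=.
have e1 : (2 * n + 1 - m.+1 = 2 * n - m)%N by lia.
rewrite e1 (natrB _ (_ : m.+1 <= 2 * n + 2)%N); last by lia.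
rewrite (natrB _ (_ : m <= 2 * n)%N); last by lia.
set Xm := Xs n m.
set Y := ('C(2 * n - m, n.+1))%:R.
have hY : Y != 0 by rewrite /Y pnatr_eq0 -lt0n bin_gt0; lia.
have hn0 : 0 <= m%:R :> rat by rewrite ler0n.
have hmr : m%:R + 1 <= n%:R :> rat by rewrite natr1 ler_nat.
rewrite (natrB _ (_ : m <= 2 * n + 1)%N); last by lia.
rewrite !natrM !natrD -[n.+1%:R]natr1 -[m.+1%:R]natr1 !exprS bin0.
clearbody Xm Y.
field.
rewrite hY /=.
have h2 : (2:rat) ^+ m != 0 by rewrite expf_neq0.
rewrite h2 andbT.
by repeat (apply/andP; split); apply: lt0r_neq0; lra.
Qed.

Theorem mainTheorem9 (n m : nat) (hm : (m <= n)%N) :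
  \sum_(0 <= j < n.+1) \sum_(0 <= i < j.+1)
      ('C(2 * n + 2, i))%:R / ('C(2 * n - m, j))%:R
  = (2%:R ^ (m%:Z - 1) : rat) * ((2 * n + 1 - m)%N)%:R *
    (harmonic n
     + (2%:R ^+ (2 * n + 1)) / ((n.+1)%:R * ('C(2 * n + 1, n.+1))%:R)
     + \sum_(1 <= k < m.+1)
         ((2%:R ^+ k.-1 * k%:R)^-1 *
          (((2%:R ^+ (2 * n + 2) * k%:R) / ((2 * n + 2 - k)%N)%:R
              - ('C(2 * n + 2, n.+1))%:R)
           / (2%:R * ('C(2 * n + 1 - k, n.+1))%:R)
           + 1))).
Proof.
transitivity (Sm n m); last exact: main_ind.
rewrite /Sm; apply: eq_bigr => j _.
by rewrite /B mulr_suml.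
Qed.
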